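(* Suppose $p\in[1,2)$, $\rho>0$ and $\mathbb{P}_\circ\in\mathscr{Q}_p$. Then $\varphi(X)=+\infty$ for every $X\in\mathcal{O}^{d,r}$.
   Context: Let $d,r$ be integers with $1\le r<d$ and $\mathcal{O}^{d,r}=\{X\in\mathbb{R}^{d\times r}: X^\top X=I_r\}$. For $p\ge 1$, $\mathscr{Q}_p$ denotes the set of Borel probability distributions $\mathbb{P}$ on $\mathbb{R}^d$ with $\mathbb{E}_{\mathbb{P}}\|\xi\|^p<\infty$. For $\mathbb{P}_1,\mathbb{P}_2\in\mathscr{Q}_p$ the type-$p$ Wasserstein distance is $\mathbb{W}_p(\mathbb{P}_1,\mathbb{P}_2)=\inf_{\mathbb{Q}\in\mathscr{J}(\mathbb{P}_1,\mathbb{P}_2)}\big(\mathbb{E}_{(\xi_1,\xi_2)\sim\mathbb{Q}}\|\xi_1-\xi_2\|_p^p\big)^{1/p}$, where $\mathscr{J}(\mathbb{P}_1,\mathbb{P}_2)$ is the set of joint distributions with marginals $\mathbb{P}_1,\mathbb{P}_2$ and $\|\cdot\|_p$ is the $\ell_p$ norm on $\mathbb{R}^d$. For $X\in\mathcal{O}^{d,r}$, $\varphi(X)=\sup\{\mathbb{E}_{\mathbb{P}}\big[\|(I_d-XX^\top)(\xi-\mathbb{E}_{\mathbb{P}}[\xi])\|_2^2\big]:\mathbb{P}\in\mathscr{Q}_p,\ \mathbb{W}_p(\mathbb{P},\mathbb{P}_\circ)\le\rho\}$. *)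

(* Defs.v *)
(* R^d is modelled as [d.-tuple R] with the product
   (coordinate) sigma-algebra provided by mathcomp-analysis. *)
From HB Require Import structures.
From mathcomp Require Import all_boot all_order all_algebra.
From mathcomp Require Import all_classical all_reals all_analysis.
Set Implicit Arguments. Unset Strict Implicit. Unset Printing Implicit Defensive.
Import Order.TTheory GRing.Theory Num.Theory.
Local Open Scope classical_set_scope.
Local Open Scope ring_scope.

Section DRPCA.
Variable R : realType.

Definition Rd (d : nat) := d.-tuple R.

Definition lp_pow (d : nat) (p : R) (x : Rd d) : R :=
  \sum_(i < d) `|tnth x i| `^ p.

Definition in_Qp (d : nat) (p : R) (P : probability (Rd d) R) : Prop :=
  (\int[P]_x (lp_pow p x)%:E < +oo)%E.

Definition is_coupling (d : nat) (P1 P2 : probability (Rd d) R)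
    (Q : probability (Rd d * Rd d)%type R) : Prop :=
  forall A : set (Rd d), measurable A ->
    Q (A `*` setT) = P1 A /\ Q (setT `*` A) = P2 A.

Definition Wasserstein (d : nat) (p : R) (P1 P2 : probability (Rd d) R) : \bar R :=
  ((ereal_inf [set c | exists Q : probability (Rd d * Rd d)%type R,
       is_coupling P1 P2 Q /\
       c = \int[Q]_z (lp_pow p ([tuple tnth z.1 i - tnth z.2 i | i < d] : Rd d)
                      )%:E ]) `^ p^-1)%E.

Definition mean (d : nat) (P : probability (Rd d) R) : 'cV[R]_d :=
  \col_i fine (\int[P]_x (tnth x i)%:E).

Definition cvec (d : nat) (x : Rd d) : 'cV[R]_d := \col_i tnth x i.

Definition sqnorm2 (d : nat) (v : 'cV[R]_d) : R := \sum_(i < d) (v i 0) ^+ 2.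

Definition pca_obj (d r : nat) (X : 'M[R]_(d, r)) (P : probability (Rd d) R) : \bar R :=
  \int[P]_x (sqnorm2 ((1%:M - X *m X^T) *m (cvec x - mean P)))%:E.

Definition varphi (d r : nat) (p rho : R) (P0 : probability (Rd d) R)
    (X : 'M[R]_(d, r)) : \bar R :=
  ereal_sup [set v | exists P : probability (Rd d) R,
     [/\ in_Qp p P, (Wasserstein p P P0 <= rho%:E)%E & v = pca_obj X P]].

End DRPCA.

(* Main.v *)
Require Import Defs.
From HB Require Import structures.
From mathcomp Require Import all_boot all_order all_algebra.
From mathcomp Require Import all_classical all_reals all_analysis.
From mathcomp Require Import measurable_realfun ring lra.
Import Order.TTheory GRing.Theory Num.Theory.
Local Open Scope classical_set_scope.
Local Open Scope ring_scope.
Set Implicit Arguments. Unset Strict Implicit.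

Lemma subr_ge0' (R : realType) (e : R) : (e <= 1)%R -> (0 <= 1 - e)%R.
Proof. by rewrite subr_ge0. Qed.

Section mixture.
Local Open Scope ereal_scope.
Context d d' (T : measurableType d) (T' : measurableType d') (R : realType).
Variables (P : probability T R) (f g : T -> T') (e : R).
Hypotheses (mf : measurable_fun setT f) (mg : measurable_fun setT g)
  (e0 : (0 <= e)%R) (e1 : (e <= 1)%R).
Let F : {mfun T >-> T'} := HB.pack f (isMeasurableFun.Build _ _ _ _ _ mf).
Let G : {mfun T >-> T'} := HB.pack g (isMeasurableFun.Build _ _ _ _ _ mg).
Let w1 : {nonneg R} := NngNum (subr_ge0' e1).
Let w2 : {nonneg R} := NngNum e0.
Definition mixm := measure_add (mscale w1 (distribution P F)) (mscale w2 (distribution P G)).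
HB.instance Definition _ := Measure.copy mixm (measure_add (mscale w1 (distribution P F)) (mscale w2 (distribution P G))).
Lemma mixmE A : mixm A = (1 - e)%:E * P (f @^-1` A) + e%:E * P (g @^-1` A).
Proof. by rewrite /mixm measure_addE. Qed.
Let mixm_setT : mixm setT = 1.
Proof. by rewrite mixmE !preimage_setT !probability_setT !mule1 -EFinD subrK. Qed.
HB.instance Definition _ := Measure_isProbability.Build _ _ _ mixm mixm_setT.
Lemma mix_integral (h : T' -> \bar R) : measurable_fun setT h -> (forall x, 0 <= h x) ->
  \int[mixm]_x h x = (1 - e)%:E * \int[P]_x h (f x) + e%:E * \int[P]_x h (g x).
Proof.
move=> mh h0.
rewrite /mixm /measure_add.
rewrite (@ge0_integral_measure_sum _ _ _ _ setT measurableT h (fun x _ => h0 x) mh).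
rewrite 2!big_ord_recl big_ord0 adde0 /=.
rewrite !ge0_integral_mscale//.
by rewrite !ge0_integral_distribution.
Qed.
End mixture.

Section meas.
Context (R : realType) (d : nat).
Lemma shift_meas (c : Rd R d) :
  measurable_fun setT (fun x : Rd R d => [tuple tnth x i + tnth c i | i < d] : Rd R d).
Proof.
apply/(@measurable_fun_tnthP _ _ (Rd R d) R d) => i.
rewrite (_ : _ \o _ = fun x : Rd R d => tnth x i + tnth c i); last first.
  by apply/funext => x /=; rewrite tnth_mktuple.
exact: (measurable_funD (measurable_tnth i) (measurable_cst (tnth c i))).
Qed.

Lemma lp1_meas p : measurable_fun setT (@lp_pow R d p).
Proof.
rewrite /lp_pow; apply: measurable_sum => i.
exact: (measurableT_comp (measurable_powR p) (measurableT_comp (@normr_measurable R setT) (measurable_tnth i))).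
Qed.

Lemma lp2_meas p : measurable_fun setT
  (fun z : Rd R d * Rd R d => lp_pow p ([tuple tnth z.1 i - tnth z.2 i | i < d] : Rd R d)).
Proof.
rewrite /lp_pow.
rewrite (_ : (fun z => _) = fun z : Rd R d * Rd R d => \sum_(i < d) `|tnth z.1 i - tnth z.2 i| `^ p); last first.
  by apply/funext => z; apply: eq_bigr => i _; rewrite tnth_mktuple.
apply: measurable_sum => i.
exact: (measurableT_comp (measurable_powR p) (measurableT_comp (@normr_measurable R setT) (measurable_funB (measurableT_comp (measurable_tnth i) measurable_fst)
   (measurableT_comp (measurable_tnth i) measurable_snd)))).
Qed.

Lemma pca_meas (M : 'M[R]_d) (m : 'cV[R]_d) :
  measurable_fun setT (fun x : Rd R d => sqnorm2 (M *m (cvec x - m))).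
Proof.
rewrite /sqnorm2.
rewrite (_ : (fun x => _) = fun x : Rd R d =>
   \sum_(i < d) (\sum_(k < d) M i k * (tnth x k - m k 0)) ^+ 2); last first.
  apply/funext => x; apply: eq_bigr => i _; rewrite mxE; congr (_ ^+ 2).
  by apply: eq_bigr => k _; rewrite !mxE.
apply: measurable_sum => i; apply: measurable_funX.
apply: measurable_sum => k.
exact: (measurable_funM (measurable_cst (M i k)) (measurable_funB (measurable_tnth k) (measurable_cst (m k 0)))).
Qed.
End meas.
Section alg.
Context (R : realType).
Lemma powR_add_le (a b p : R) : 0 <= p ->
  `|a + b| `^ p <= 2 `^ p * (`|a| `^ p + `|b| `^ p).
Proof.
move=> p0.
have mx : `|a + b| <= 2 * Num.max `|a| `|b|.
  rewrite (le_trans (ler_normD _ _))// mulr2n mulrDl mul1r.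
  by apply: lerD; rewrite le_max lexx ?orbT.
have := ge0_ler_powR p0 (x:=`|a+b|) (y:= 2 * Num.max `|a| `|b|).
rewrite !nnegrE normr_ge0 mulr_ge0 ?le_max ?normr_ge0// => /(_ isT isT mx) h.
apply: (le_trans h); rewrite powRM// ?le_max ?normr_ge0//.
apply: ler_wpM2l; first exact: powR_ge0.
case: (leP `|a| `|b|) => _.
  by rewrite lerDr powR_ge0.
by rewrite lerDl powR_ge0.
Qed.

Lemma sqnorm2_ge0 d (v : 'cV[R]_d) : 0 <= sqnorm2 v.
Proof. by rewrite /sqnorm2 sumr_ge0// => i _; rewrite sqr_ge0. Qed.

Lemma sqnorm2_two d (A B : 'cV[R]_d) (t : R) :
  t ^+ 2 / 2 * sqnorm2 B <= sqnorm2 A + sqnorm2 (A + t *: B).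
Proof.
rewrite /sqnorm2 mulr_sumr -big_split /=; apply: ler_sum => i _.
rewrite !mxE.
have -> : t ^+ 2 / 2 * B i 0 ^+ 2 = (t * B i 0) ^+ 2 / 2 by rewrite exprMn mulrAC.
move: (A i 0) (t * B i 0) => a b.
have := sqr_ge0 (a + b / 2); nra.
Qed.

Lemma mx_nonzero d r (X : 'M[R]_(d, r)) : (r < d)%N ->
  exists i j, (1%:M - X *m X^T) i j != 0.
Proof.
move=> rd; have [H|H] := eqVneq (1%:M - X *m X^T) 0.
  move/eqP: H; rewrite subr_eq0 => /eqP H.
  have := mxrank1 R d; rewrite H => h.
  have := mxrankM_maxl X X^T; rewrite h => h2.
  have := leq_trans h2 (rank_leq_col X).
  by rewrite leqNgt rd.
apply: contrapT => nex; move/eqP: H; apply; apply/matrixP => i j.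
rewrite [RHS]mxE; apply: contrapT => hij; apply: nex; exists i, j; exact/eqP.
Qed.
End alg.
Section lp.
Context (R : realType) (d : nat).
Lemma lp_pow_ge0 p (x : Rd R d) : 0 <= lp_pow p x.
Proof. by rewrite /lp_pow sumr_ge0// => i _; exact: powR_ge0. Qed.

Lemma lp_shift_le p (c x : Rd R d) : 0 <= p ->
  lp_pow p ([tuple tnth x i + tnth c i | i < d] : Rd R d) <=
  2 `^ p * (lp_pow p x + lp_pow p c).
Proof.
move=> p0; rewrite /lp_pow -big_split mulr_sumr /=; apply: ler_sum => i _.
by rewrite tnth_mktuple powR_add_le.
Qed.

Lemma lp_diag p (x : Rd R d) : p != 0 ->
  lp_pow p ([tuple tnth x i - tnth x i | i < d] : Rd R d) = 0.
Proof.
move=> p0; rewrite /lp_pow big1// => i _.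
by rewrite tnth_mktuple subrr normr0 powR0.
Qed.

Lemma lp_shift_diff p (c x : Rd R d) :
  lp_pow p ([tuple tnth ([tuple tnth x i + tnth c i | i < d] : Rd R d) i - tnth x i | i < d] : Rd R d)
  = lp_pow p c.
Proof.
by rewrite /lp_pow; apply: eq_bigr => i _; rewrite !tnth_mktuple addrAC subrr add0r.
Qed.

Lemma lp_unit p (t : R) (j : 'I_d) : p != 0 ->
  lp_pow p ([tuple t * (i == j)%:R | i < d] : Rd R d) = `|t| `^ p.
Proof.
move=> p0; rewrite /lp_pow (bigD1 j)//= big1 ?addr0.
  by rewrite tnth_mktuple eqxx mulr1.
by move=> i /negbTE ij; rewrite tnth_mktuple ij mulr0 normr0 powR0.
Qed.
End lp.
Unset Implicit Arguments.
Set Strict Implicit.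

Theorem mainTheorem2 (R : realType) (d r : nat) (hr1 : (1 <= r)%N) (hrd : (r < d)%N)
    (p rho : R) (hp1 : 1 <= p) (hp2 : p < 2) (hrho : 0 < rho)
    (P0 : probability (Rd R d) R) (hP0 : in_Qp p P0)
    (X : 'M[R]_(d, r)) (hX : X^T *m X = 1%:M) :
  varphi p rho P0 X = +oo%E.
Proof.
have [i0 [j hij]] := mx_nonzero X hrd.
set M := 1%:M - X *m X^T in hij.
pose ej : Rd R d := [tuple (i == j)%:R | i < d].
pose c := sqnorm2 (M *m cvec ej).
have c0 : 0 < c.
  have e1 : (M *m cvec ej) i0 0 = M i0 j.
    rewrite mxE (bigD1 j)//= big1 ?addr0; first by rewrite /cvec mxE tnth_mktuple eqxx mulr1.
    by move=> k /negbTE kj; rewrite /cvec mxE tnth_mktuple kj mulr0.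
  rewrite /c /sqnorm2 (bigD1 i0)//= e1.
  have h1 : 0 < M i0 j ^+ 2 by rewrite lt_def sqr_ge0 sqrf_eq0 hij.
  have h2 : 0 <= \sum_(i < d | i != i0) (M *m cvec ej) i 0 ^+ 2.
    by rewrite sumr_ge0// => i _; rewrite sqr_ge0.
  lra.
have p0 : 0 < p by apply: (lt_le_trans ltr01).
have pn0 : p != 0 by rewrite gt_eqF.
have rp0 : 0 < rho `^ p by rewrite powR_gt0.
suff HB : forall B : R, 0 < B -> (B%:E <= varphi p rho P0 X)%E.
  move: HB; case: (varphi p rho P0 X) => [s| |] // HB.
    have hm : 0 <= Num.max s 0 by rewrite le_max lexx orbT.
    have := HB (Num.max s 0 + 1)%R; rewrite lee_fin.
    have hs : s <= Num.max s 0 by rewrite le_max lexx.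
    have hp : 0 < Num.max s 0 + 1 by lra.
    move=> /(_ hp) h; exfalso; lra.
  by have := HB 1 ltr01.
move=> B B0.
pose q := 2 - p.
have q0 : 0 < q by rewrite /q subr_gt0.
have q1 : q <= 1 by rewrite /q lerBlDr -lerBlDl; lra.
pose K := Num.max 1 (Num.max (2 * rho `^ p) (2 * B / (rho `^ p * c))).
have K1 : 1 <= K by rewrite le_max lexx.
have K2 : 2 * rho `^ p <= K by rewrite !le_max lexx orbT.
have K3 : 2 * B / (rho `^ p * c) <= K by rewrite !le_max lexx !orbT.
pose t := K `^ q^-1.
have qi1 : 1 <= q^-1 by rewrite invf_ge1.
have tK : K <= t := le1r_powR K1 qi1.
have t1 : 1 <= t by apply: le_trans tK.
have t0 : 0 < t by apply: lt_le_trans t1.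
have ttp : t <= t `^ p := le1r_powR t1 hp1.
have tq : t `^ q = K.
  by rewrite /t -powRrM mulVf ?gt_eqF// powRr1// (le_trans ler01 K1).
have tp0 : 0 < t `^ p by rewrite powR_gt0.
pose e := rho `^ p / t `^ p.
have e0 : 0 <= e by rewrite /e divr_ge0// ltW.
have eh : e <= 2^-1.
  rewrite /e ler_pdivrMr//; lra.
have e1 : e <= 1 by lra.
have et2 : e * t ^+ 2 = rho `^ p * K.
  rewrite /e mulrAC -mulrA; congr (_ * _).
  rewrite -tq /q powRB; last by rewrite gt_eqF ?orbT ?implybT.
  by rewrite -[2]/(2%:R) powR_mulrn ?(ltW t0)// mulrC.
pose v : Rd R d := [tuple t * (i == j)%:R | i < d].
pose sh := fun x : Rd R d => ([tuple tnth x i + tnth v i | i < d] : Rd R d).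
have msh : measurable_fun setT sh := shift_meas v.
have mid : measurable_fun [set: Rd R d] id := @measurable_id _ (Rd R d) setT.
pose P := mixm P0 mid msh e0 e1.
pose Q := mixm P0 (measurable_fun_pair mid mid) (measurable_fun_pair msh mid) e0 e1.
have mE : forall f : Rd R d -> R, measurable_fun setT f ->
    measurable_fun [set: Rd R d] (fun x => (f x)%:E).
  by move=> f mf; exact/measurable_EFinP.
apply: (@le_trans _ _ (pca_obj X P)).
  rewrite /pca_obj.
  move: (mean P) => m.
  rewrite /P /= mix_integral /=; last 2 first.
  - exact: mE (pca_meas _ m).
  - by move=> x; rewrite lee_fin sqnorm2_ge0.
  set I1 := (\int[P0]_x _)%E.
  set I2 := (\int[P0]_x _)%E.
  have I1ge0 : (0 <= I1)%E by apply: integral_ge0 => x _; rewrite lee_fin sqnorm2_ge0.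
  have step1 : (e%:E * I1 <= (1 - e)%:E * I1)%E.
    by apply: lee_wpmul2r => //; rewrite lee_fin; lra.
  apply: (le_trans _ (leeD2r _ step1)).
  rewrite -ge0_muleDr //; last by apply: integral_ge0 => x _; rewrite lee_fin sqnorm2_ge0.
  rewrite /I1 /I2 -ge0_integralD //; last 4 first.
  - by move=> x _; rewrite lee_fin sqnorm2_ge0.
  - exact: mE (pca_meas _ m).
  - by move=> x _; rewrite lee_fin sqnorm2_ge0.
  - exact: mE (measurableT_comp (pca_meas _ m) msh).
  have hpt : forall x : Rd R d, t ^+ 2 / 2 * c <=
      sqnorm2 ((1%:M - X *m X^T) *m (cvec x - m)) +
      sqnorm2 ((1%:M - X *m X^T) *m (cvec (sh x) - m)).
    move=> x.
    have -> : cvec (sh x) - m = (cvec x - m) + t *: cvec ej.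
      apply/matrixP => i k; rewrite !mxE /sh !tnth_mktuple; ring.
    by rewrite (mulmxDr _ (cvec x - m)) -scalemxAr; exact: sqnorm2_two.
  apply: (@le_trans _ _ (e%:E * \int[P0]_x (t ^+ 2 / 2 * c)%:E)%E); last first.
    apply: lee_wpmul2l; first by rewrite lee_fin.
    apply: ge0_le_integral.
    - by [].
    - by move=> x _; rewrite lee_fin mulr_ge0 ?(ltW c0)// divr_ge0// sqr_ge0.
    - exact: measurable_cst.
    - by apply: emeasurable_funD; [exact: mE (pca_meas _ m)|exact: mE (measurableT_comp (pca_meas _ m) msh)].
    - by move=> x _; rewrite -EFinD lee_fin hpt.
  rewrite integral_cst// [X in (_ * (_ * X))%E]probability_setT mule1 -EFinM lee_fin.
  have K3' : 2 * B <= K * (rho `^ p * c) by rewrite -ler_pdivrMr ?mulr_gt0.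
  have -> : e * (t ^+ 2 / 2 * c) = (e * t ^+ 2) * c / 2 by ring.
  rewrite et2; nra.
apply: ereal_sup_ubound; exists P; split => //.
  rewrite /in_Qp /P mix_integral /=; last 2 first.
  - exact: mE (lp1_meas p).
  - by move=> x; rewrite lee_fin lp_pow_ge0.
  apply: lte_add_pinfty.
    by apply: lte_mul_pinfty; [rewrite lee_fin subr_ge0| by []| exact: hP0].
  apply: lte_mul_pinfty; [by rewrite lee_fin| by []|].
  have hle : (\int[P0]_x (lp_pow p (sh x))%:E <=
      \int[P0]_x ((2 `^ p * (lp_pow p x + lp_pow p v))%:E))%E.
    apply: ge0_le_integral => //.
    - by move=> x _; rewrite lee_fin lp_pow_ge0.
    - exact: mE (measurableT_comp (lp1_meas p) msh).
    - apply: mE; apply: (measurable_funM (measurable_cst _)).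
      exact: (measurable_funD (lp1_meas p) (measurable_cst _)).
    - by move=> x _; rewrite lee_fin lp_shift_le// ltW.
  apply: (le_lt_trans hle).
  under eq_integral => x _ do rewrite EFinM EFinD.
  rewrite ge0_integralZl; [|by []| |by move=> x _; rewrite -EFinD lee_fin addr_ge0 ?lp_pow_ge0|by rewrite lee_fin powR_ge0]; last first.
    by apply: emeasurable_funD; [exact: mE (lp1_meas p)| exact: measurable_cst].
  apply: lte_mul_pinfty; [by rewrite lee_fin powR_ge0|by []|].
  rewrite ge0_integralD; [|by []|by move=> x _; rewrite lee_fin lp_pow_ge0|exact: mE (lp1_meas p)|by move=> x _; rewrite lee_fin lp_pow_ge0|exact: measurable_cst].
  apply: lte_add_pinfty; first exact: hP0.
  rewrite integral_cst//; apply: lte_mul_pinfty; [by rewrite lee_fin lp_pow_ge0|by []|].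
  by apply: (le_lt_trans (probability_le1 P0 measurableT)); rewrite ltry.
rewrite /Wasserstein.
set S := [set _ | _].
have SQ : S (rho `^ p)%:E.
  exists Q; split.
    move=> A mA; rewrite /Q /P /= !mixmE; split.
      have ha : ((fun x => (x, x)) @^-1` (A `*` setT)) = A.
        by apply/seteqP; split => x /=; [case|move=> ?; split].
      have hb : ((fun x => (sh x, x)) @^-1` (A `*` setT)) = sh @^-1` A.
        by apply/seteqP; split => x /=; [case|move=> ?; split].
      by rewrite ha hb.
    have h1 : ((fun x => (x, x)) @^-1` (setT `*` A)) = A.
      by apply/seteqP; split => x /=; [case|move=> ?; split].
    have h2 : ((fun x => (sh x, x)) @^-1` (setT `*` A)) = A.
      by apply/seteqP; split => x /=; [case|move=> ?; split].
    rewrite h1 h2 -ge0_muleDl ?lee_fin ?subr_ge0// -EFinD subrK mul1e.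
    by [].
  apply/esym; rewrite /Q /= mix_integral /=; last 2 first.
  - by apply/measurable_EFinP; exact: (lp2_meas p).
  - by move=> z; rewrite lee_fin lp_pow_ge0.
  under eq_integral => x _ do rewrite lp_diag//.
  have hsh : forall x, lp_pow p ([tuple tnth (sh x) i - tnth x i | i < d] : Rd R d) = t `^ p.
    move=> x; rewrite -(ger0_norm (ltW t0)) -(@lp_unit R d p t j pn0) /lp_pow.
    by apply: eq_bigr => i _; rewrite !tnth_mktuple addrAC subrr add0r.
  rewrite [X in (_ + _ * X)%E](eq_integral (fun _ => (t `^ p)%:E)); last first.
    by move=> x _; congr EFin; exact: hsh.
  rewrite integral0 mule0 add0e integral_cst//.
  rewrite [X in (_ * (_ * X))%E]probability_setT mule1 -EFinM.
  by rewrite /e divfK// gt_eqF.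
have i0' : (0 <= ereal_inf S)%E.
  by apply: le_ereal_inf_tmp => y [Q' [_ ->]]; apply: integral_ge0 => z _; rewrite lee_fin lp_pow_ge0.
have i1 : (ereal_inf S <= (rho `^ p)%:E)%E := ereal_inf_lbound SQ.
apply: (le_trans (gt0_ler_poweR _ _ _ i1)).
- by rewrite invr_ge0 ltW.
- by rewrite in_itv /= i0' leey.
- by rewrite in_itv /= lee_fin powR_ge0 leey.
by rewrite poweR_EFin -powRrM mulfV// powRr1// ltW.
Qed.
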